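(* Let $w\geqslant2$, $h\geqslant1$ be integers and $\underline h=2^{\lfloor\log_2h\rfloor}$. Then $\mathrm{OR}(\mathcal{H}_{h,w})\geqslant\mathrm{OR}(\mathcal{H}_{\underline h,w})$, where $\mathcal{H}_{h,w}$ denotes the set of fast Hough transform patterns on the $h\times w$ image.
   Context: Image: for height $h$ and width $w$, the set $I$ of pixels $p_{ij}$, $i=0,\dots,h-1$ (row, from the bottom), $j=0,\dots,w-1$ (column). A pattern is a nonempty subset of $I$; a pattern set $\mathcal{T}=\{T_k\}_{k=1}^m$ is a nonempty set of distinct patterns; computing it means computing all $y_k=\sum_{p\in T_k}p$. A circuit is a directed acyclic graph with one input node of fanin zero per pixel and $m$ output nodes of fanout zero; each node of nonzero fanin (gate) computes the semigroup sum of its in-neighbours. Size = number of edges. $\mathrm{OR}(\mathcal{T})$ is the minimal size of a circuit computing $\mathcal{T}$ over $(\{0,1\},\vee)$. FHT patterns: for a pattern $T$ with exactly one pixel in each of its rows, $\Delta(T)=(j_{top}-j_{bot})\bmod w$ (column indices of topmost and bottommost pixels), $\mathit{tran}_{a,b}(T)=\{p_{i+a,\,(j+b)\bmod w}\mid p_{ij}\in T\}$. For $h=2^d$: $\mathcal{H}_0=\{\{p_{0j}\}\mid j=0,\dots,w-1\}$, $\mathcal{H}_k=\{T\cup\mathit{tran}_{2^{k-1},\,\Delta(T)+s}(T)\mid T\in\mathcal{H}_{k-1},\ s\in\{0,1\}\}$ for $k=1,\dots,d$, and $\mathcal{H}_{h,w}=\mathcal{H}_d$. For arbitrary $h$, with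 $\overline h=2^{\lceil\log_2h\rceil}$, view the $h\times w$ image $I$ as the bottom $h$ rows of the $\overline h\times w$ image and set $\mathcal{H}_{h,w}=\{T\cap I\mid T\in\mathcal{H}_{\overline h,w}\}$. *)

(* Defs.v *)
From Stdlib Require Import ClassicalEpsilon.
From mathcomp Require Import all_boot.
Set Implicit Arguments. Unset Strict Implicit. Unset Printing Implicit Defensive.

(* Circuits over the semigroup ({0,1}, \/) with inputs indexed by P.       *)
(* Nodes are  inl p  (the input node of pixel p, fanin zero) and  inr g    *)
(* (gate g : 'I_ngates).  Gates are listed in a topological order: a gate  *)
(* may only read inputs and gates of smaller index (this is no loss of     *)
(* generality for a DAG).  Edges are given by in-neighbour sets (a DAG has *)
Record circuit (P : finType) := Circuit {
  ngates : nat;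
  gin_in : 'I_ngates -> {set P};
  gin_g  : 'I_ngates -> {set 'I_ngates};
  gin_acyclic : forall g g' : 'I_ngates, g' \in gin_g g -> g' < g;
  gin_nonempty : forall g : 'I_ngates, (0 < #|gin_in g| + #|gin_g g|)%N
}.

Definition node (P : finType) (C : circuit P) : Type := (P + 'I_(ngates C))%type.

(* size = number of edges = sum of fanins of gates *)
Definition csize (P : finType) (C : circuit P) : nat :=
  \sum_(g < ngates C) (#|gin_in g| + #|gin_g g|).

Definition fanout0 (P : finType) (C : circuit P) (v : node C) : Prop :=
  match v with
  | inl p => forall g : 'I_(ngates C), p \notin gin_in g
  | inr g' => forall g : 'I_(ngates C), g' \notin gin_g g
  end.

(* ngates C suffices since gate g has depth at most g+1.                   *)
Fixpoint gval_aux (P : finType) (C : circuit P) (x : P -> bool) (k : nat)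
    (g : 'I_(ngates C)) : bool :=
  match k with
  | 0 => false
  | k'.+1 => [exists p in gin_in g, x p] || [exists g' in gin_g g, gval_aux x k' g']
  end.

Definition nodeval (P : finType) (C : circuit P) (x : P -> bool) (v : node C) : bool :=
  match v with
  | inl p => x p
  | inr g => gval_aux x (ngates C) g
  end.

Definition computes (P : finType) (C : circuit P) (Ts : {set {set P}}) : Prop :=
  forall T, T \in Ts ->
    exists v : node C, fanout0 v /\
      forall x : P -> bool, @nodeval P C x v = [exists p in T, x p].

Definition has_circuit_of_size (P : finType) (Ts : {set {set P}}) (n : nat) : Prop :=
  exists C : circuit P, computes C Ts /\ csize C = n.

Definition has_circuit_of_sizeb (P : finType) (Ts : {set {set P}}) (n : nat) : bool :=
  if excluded_middle_informative (has_circuit_of_size Ts n) then true else false.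

(* OR(Ts) = minimal size of a circuit computing Ts (0 if none exists,      *)
(* which never happens for pattern sets).                                  *)
Definition ORsize (P : finType) (Ts : {set {set P}}) : nat :=
  match excluded_middle_informative (exists n, has_circuit_of_sizeb Ts n) with
  | left H => ex_minn H
  | right _ => 0
  end.

(* FHT patterns.  A pattern with exactly one pixel in each of the rows     *)
(* 0..2^k-1 is encoded as the sequence of its column indices, bottom row   *)
(* first (entry i = column of the pixel in row i).                         *)
Definition fht_delta (w : nat) (T : seq nat) : nat :=
  (last 0 T + w - head 0 T) %% w.

Definition fht_join (w b : nat) (T : seq nat) : seq nat :=
  T ++ [seq (j + b) %% w | j <- T].

Fixpoint fht_seq (w d : nat) : seq (seq nat) :=
  match d with
  | 0 => [seq [:: j] | j <- iota 0 w]
  | d'.+1 => [seq fht_join w (fht_delta w T + s) T | T <- fht_seq w d', s <- [:: 0; 1]]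
  end.

(* H_{h,w}: patterns of H_{hbar,w}, hbar = 2^ceil(log2 h), intersected    *)
(* with the bottom h rows, as sets of pixels p = (row, column).            *)
Definition FHT (h w : nat) : {set {set 'I_h * 'I_w}} :=
  [set S : {set 'I_h * 'I_w} |
     has (fun T => S == [set p : 'I_h * 'I_w | nth 0 T p.1 == p.2])
         (fht_seq w (up_log 2 h))].

(* Main.v *)
Require Import Defs.
From Stdlib Require Import ClassicalEpsilon Classical.
From mathcomp Require Import all_boot.
Set Implicit Arguments. Unset Strict Implicit. Unset Printing Implicit Defensive.

Lemma gval_mono (P : finType) (C : circuit P) (x : P -> bool) k (g : 'I_(ngates C)) :
  gval_aux x k g -> gval_aux x k.+1 g.
Proof.
elim: k g => [|k IH] g //= /orP [->//|/existsP [g' /andP [Hg' Hv]]].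
apply/orP; right; apply/existsP; exists g'; rewrite Hg' /=; exact: IH.
Qed.

Lemma gval_monoL (P : finType) (C : circuit P) (x : P -> bool) k m (g : 'I_(ngates C)) :
  k <= m -> gval_aux x k g -> gval_aux x m g.
Proof.
move=> /subnK <-; elim: (m - k) => [|n IH] //= H.
by apply: gval_mono; apply: IH.
Qed.

Lemma gval_unfold (P : finType) (C : circuit P) (x : P -> bool) k (g : 'I_(ngates C)) :
  gval_aux x k g ->
  [exists p in gin_in g, x p] || [exists g' in gin_g g, gval_aux x k.-1 g'].
Proof. by case: k. Qed.

Definition ext (P Q : finType) (e : Q -> P) (x : Q -> bool) (p : P) : bool :=
  [exists q, (e q == p) && x q].

Lemma ext_or (P Q : finType) (e : Q -> P) (x : Q -> bool) (S : {set P}) :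
  [exists p in S, ext e x p] = [exists q in e @^-1: S, x q].
Proof.
apply/existsP/existsP.
  move=> [p /andP [HpS /existsP [q /andP [/eqP Hq Hx]]]].
  by exists q; rewrite inE Hq HpS.
move=> [q /andP [Hq Hx]]; exists (e q); rewrite inE in Hq; rewrite Hq /=.
by apply/existsP; exists q; rewrite eqxx.
Qed.

Lemma ext_e (P Q : finType) (e : Q -> P) (x : Q -> bool) q :
  injective e -> ext e x (e q) = x q.
Proof.
move=> inj; apply/existsP/idP.
  by move=> [q' /andP [/eqP /inj -> ]].
by move=> Hx; exists q; rewrite eqxx.
Qed.

Lemma card_preim_inj (P Q : finType) (e : Q -> P) (A : {set P}) :
  injective e -> #|e @^-1: A| <= #|A|.
Proof.
move=> inj; rewrite -(card_imset _ inj); apply: subset_leq_card.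
by apply/subsetP=> p /imsetP [q]; rewrite inE => Hq ->.
Qed.

Lemma inl_out (P Q : finType) (e : Q -> P) (S : {set P}) p :
  injective e ->
  (forall x : P -> bool, x p = [exists p' in S, x p']) -> (e @^-1: S != set0) ->
  exists q, e q = p /\ forall x' : Q -> bool, x' q = [exists q' in e @^-1: S, x' q'].
Proof.
move=> inj Hv /set0Pn [q Hq]; exists q.
have Hp : e q = p.
  have := Hv (fun p' => p' == e q).
  have -> : [exists p' in S, p' == e q].
    by apply/existsP; exists (e q); rewrite inE in Hq; rewrite Hq eqxx.
  by move/eqP.
split=> // x'; rewrite -ext_or -Hv -Hp ext_e //.
Qed.
Definition zerog (P Q : finType) (e : Q -> P) (C : circuit P) (g : 'I_(ngates C)) : bool :=
  if excluded_middle_informative (forall x : Q -> bool, gval_aux (ext e x) (ngates C) g = false)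
  then true else false.

Lemma zerogP (P Q : finType) (e : Q -> P) (C : circuit P) (g : 'I_(ngates C)) :
  zerog e g -> forall x : Q -> bool, gval_aux (ext e x) (ngates C) g = false.
Proof. by rewrite /zerog; case: excluded_middle_informative. Qed.

Lemma nzerogP (P Q : finType) (e : Q -> P) (C : circuit P) (g : 'I_(ngates C)) :
  ~~ zerog e g -> exists x : Q -> bool, gval_aux (ext e x) (ngates C) g.
Proof.
rewrite /zerog; case: excluded_middle_informative => // H _.
apply: NNPP => H'; apply: H => x; apply/negbTE/negP => Hx; apply: H'; by exists x.
Qed.

Lemma rC_acyc (P Q : finType) (e : Q -> P) (C : circuit P) :
  forall g g' : 'I_(ngates C),
  g' \in (if zerog e g then set0 else [set g'' in gin_g g | ~~ zerog e g'']) -> g' < g.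
Proof.
move=> g g'; case: (zerog e g); first by rewrite inE.
by rewrite inE => /andP [/gin_acyclic].
Qed.

Lemma rC_nonempty (P Q : finType) (e : Q -> P) (C : circuit P) (q0 : Q) :
  forall g : 'I_(ngates C),
  0 < #|(if zerog e g then [set q0] else e @^-1: gin_in g)|
    + #|(if zerog e g then set0 else [set g'' in gin_g g | ~~ zerog e g''])|.
Proof.
move=> g; case Hz: (zerog e g); first by rewrite cards1.
have [x Hx] := nzerogP (negbT Hz).
move/gval_unfold: Hx => /orP [|/existsP [g' /andP [Hg' Hv]]].
  rewrite ext_or => /existsP [q /andP [Hq _]].
  rewrite lt0n addn_eq0 negb_and cards_eq0; apply/orP; left.
  by apply/set0Pn; exists q.
rewrite lt0n addn_eq0 negb_and (cards_eq0 [set _ in _ | _]); apply/orP; right.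
apply/set0Pn; exists g'; rewrite inE Hg' /=.
apply/negP => /zerogP H; move: (H x).
by rewrite (gval_monoL (leq_pred _) Hv).
Qed.

Definition restrC (P Q : finType) (e : Q -> P) (C : circuit P) (q0 : Q) : circuit Q :=
  @Circuit Q (ngates C)
    (fun g => if zerog e g then [set q0] else e @^-1: gin_in g)
    (fun g => if zerog e g then set0 else [set g'' in gin_g g | ~~ zerog e g''])
    (@rC_acyc P Q e C) (@rC_nonempty P Q e C q0).

Lemma restrC_val (P Q : finType) (e : Q -> P) (C : circuit P) (q0 : Q) (x : Q -> bool) k :
  k <= ngates C -> forall g : 'I_(ngates C), ~~ zerog e g ->
  @gval_aux Q (restrC e C q0) x k g = gval_aux (ext e x) k g.
Proof.
elim: k => [|k IH] // Hk g Hz /=.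
rewrite (negbTE Hz) ext_or; congr orb.
apply/existsP/existsP.
  move=> [g' /andP [Hg' Hv]]; move: Hg'; rewrite inE => /andP [Hg' Hz'].
  by exists g'; rewrite Hg' /= -IH // ltnW.
move=> [g' /andP [Hg' Hv]].
have Hz' : ~~ zerog e g'.
  apply/negP => /zerogP H; move: (H x).
  by rewrite (gval_monoL (ltnW Hk) Hv).
by exists g'; rewrite inE Hg' Hz' /= IH // ltnW.
Qed.
Lemma restrC_size (P Q : finType) (e : Q -> P) (C : circuit P) (q0 : Q) :
  injective e -> csize (restrC e C q0) <= csize C.
Proof.
move=> inj; rewrite /csize /=; apply: leq_sum => g _.
case Hz: (zerog e g).
  by rewrite cards1 cards0; apply: gin_nonempty.
apply: leq_add; first exact: card_preim_inj.
by apply: subset_leq_card; apply/subsetP => g'; rewrite inE => /andP [].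
Qed.

Lemma emptyC_acyc (Q : finType) : forall g g' : 'I_0, g' \in (set0 : {set 'I_0}) -> g' < g.
Proof. by case. Qed.
Lemma emptyC_ne (Q : finType) : forall g : 'I_0, 0 < #|(set0 : {set Q})| + #|(set0 : {set 'I_0})|.
Proof. by case. Qed.
Definition emptyC (Q : finType) : circuit Q :=
  @Circuit Q 0 (fun _ => set0) (fun _ => set0) (@emptyC_acyc Q) (@emptyC_ne Q).

Lemma gval_false (P Q : finType) (e : Q -> P) (C : circuit P) (x : Q -> bool) k :
  (forall q (g : 'I_(ngates C)), e q \notin gin_in g) ->
  forall g : 'I_(ngates C), gval_aux (ext e x) k g = false.
Proof.
move=> H; elim: k => [|k IH] g //=.
apply/norP; split.
  apply/negP => /existsP [p /andP [Hp /existsP [q /andP [/eqP Hq _]]]].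
  by move: (H q g); rewrite Hq Hp.
by apply/negP => /existsP [g' /andP [_]]; rewrite IH.
Qed.

Lemma restrict (P Q : finType) (e : Q -> P) (Ts : {set {set P}}) (Ts' : {set {set Q}}) :
  injective e ->
  (forall T, T \in Ts' -> T != set0 /\ exists2 S, S \in Ts & T = e @^-1: S) ->
  forall C : circuit P, computes C Ts -> exists C' : circuit Q, computes C' Ts' /\ csize C' <= csize C.
Proof.
move=> inj HT C HC.
case: (classic (exists q0 (g0 : 'I_(ngates C)), e q0 \in gin_in g0)) => [[q0 [g0 Hq0]]|HB].
  exists (restrC e C q0); split; last exact: restrC_size.
  move=> T /HT [Tne [S HS HTS]]; subst T.
  have [v [Hfo Hv]] := HC S HS.
  case: v Hfo Hv => [p|g] Hfo Hv.
    have [q [Hqp Hq]] := inl_out inj Hv Tne.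
    exists (inl q); split => // g /=.
    case: (zerog e g).
      rewrite inE; apply/negP => /eqP Hqq; move: (Hfo g0).
      by rewrite -Hqp Hqq Hq0.
    by rewrite inE Hqp Hfo.
  have Hz : ~~ zerog e g.
    apply/negP => /zerogP H.
    move/set0Pn: Tne => [q Hq].
    move: (H (fun q' => q' == q)); have /= -> := Hv (ext e (fun q' => q' == q)); rewrite ext_or.
    by have -> : [exists q' in e @^-1: S, q' == q] by apply/existsP; exists q; rewrite Hq eqxx.
  exists (inr g); split.
    move=> g2 /=; case: (zerog e g2); first by rewrite inE.
    by rewrite inE negb_and Hfo.
  by move=> x /=; rewrite restrC_val //; have /= -> := Hv (ext e x); rewrite ext_or.
exists (emptyC Q); split; last by rewrite /csize big_ord0.
have HB' : forall q (g : 'I_(ngates C)), e q \notin gin_in g.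
  by move=> q g; apply/negP => H; apply: HB; exists q, g.
move=> T /HT [Tne [S HS HTS]]; subst T.
have [v [Hfo Hv]] := HC S HS.
case: v Hfo Hv => [p|g] Hfo Hv.
  have [q [Hqp Hq]] := inl_out inj Hv Tne.
  by exists (inl q); split => //; case.
exfalso; move/set0Pn: Tne => [q Hq].
move: (Hv (ext e (fun q' => q' == q))); rewrite /= gval_false // ext_or.
by have -> : [exists q' in e @^-1: S, q' == q] by apply/existsP; exists q; rewrite Hq eqxx.
Qed.
Lemma trivial_circuit (P : finType) (Ts : {set {set P}}) :
  (forall T, T \in Ts -> T != set0) -> exists C : circuit P, computes C Ts.
Proof.
move=> Hne.
have acyc : forall g g' : 'I_#|Ts|, g' \in (set0 : {set 'I_#|Ts|}) -> g' < g.
  by move=> g g'; rewrite inE.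
have ne : forall g : 'I_#|Ts|, 0 < #|(@enum_val _ (mem Ts) g)| + #|(set0 : {set 'I_#|Ts|})|.
  move=> g; rewrite cards0 addn0 lt0n cards_eq0; apply: Hne; exact: enum_valP.
exists (@Circuit P #|Ts| (fun g => @enum_val _ (mem Ts) g) (fun _ => set0) acyc ne).
move=> T HT; exists (inr (enum_rank_in HT T)); split.
  by move=> g /=; rewrite inE.
move=> x /=.
have H : forall k, 0 < k -> forall g,
   @gval_aux P (@Circuit P #|Ts| (fun g => @enum_val _ (mem Ts) g) (fun _ => set0) acyc ne) x k g
   = [exists p in @enum_val _ (mem Ts) g, x p].
  case=> // k _ g /=.
  apply/idP/idP => [/orP [//|/existsP [g' /andP []]]|->//]; by rewrite inE.
rewrite H ?enum_rankK_in //.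
exact: (leq_ltn_trans (leq0n _) (ltn_ord (enum_rank_in HT T))).
Qed.

Lemma ORsize_mono (P Q : finType) (Ts : {set {set P}}) (Ts' : {set {set Q}}) :
  (exists C : circuit P, computes C Ts) ->
  (forall C : circuit P, computes C Ts -> exists C' : circuit Q, computes C' Ts' /\ csize C' <= csize C) ->
  ORsize Ts' <= ORsize Ts.
Proof.
move=> [C0 HC0] Hr.
have Hex : exists n, has_circuit_of_sizeb Ts n.
  exists (csize C0); rewrite /has_circuit_of_sizeb.
  by case: excluded_middle_informative => // [[]]; exists C0.
rewrite /ORsize; case: excluded_middle_informative => // H.
case: excluded_middle_informative => [H'|[]]; last by [].
case: (ex_minnP H') => n Hn _.
move: Hn; rewrite /has_circuit_of_sizeb; case: excluded_middle_informative => // [[C [HC HCs]]] _.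
have [C' [HC' Hs]] := Hr C HC.
case: (ex_minnP H) => m _ Hm.
apply: (leq_trans (Hm (csize C') _)); last by rewrite -HCs.
rewrite /has_circuit_of_sizeb; case: excluded_middle_informative => // [[]].
by exists C'.
Qed.
Lemma fht_size (w n : nat) (T : seq nat) : T \in fht_seq w n -> size T = 2 ^ n.
Proof.
elim: n T => [|n IH] T.
  by move/mapP => [j _ ->].
move=> H; have [T0 [s [HT0 _ ->]]] := allpairsPdep H.
by rewrite /fht_join size_cat size_map (IH _ HT0) expnS mul2n addnn.
Qed.

Lemma fht_lt (w n : nat) (T : seq nat) : 0 < w -> T \in fht_seq w n -> all (fun j => j < w) T.
Proof.
move=> w0; elim: n T => [|n IH] T.
  by move/mapP => [j]; rewrite mem_iota add0n => /andP [_ Hj] -> /=; rewrite Hj.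
move=> H; have [T0 [s [HT0 _ ->]]] := allpairsPdep H.
rewrite /fht_join all_cat (IH _ HT0) /=.
by apply/allP => j /mapP [j' _ ->]; rewrite ltn_mod.
Qed.

Lemma fht_ext (w k m : nat) (T : seq nat) : T \in fht_seq w k ->
  exists s, T ++ s \in fht_seq w (m + k).
Proof.
move=> HT; elim: m => [|m [s Hs]]; first by exists [::]; rewrite cats0.
exists (s ++ [seq (j + (fht_delta w (T ++ s) + 0)) %% w | j <- T ++ s]).
rewrite addSn catA.
apply: (allpairs_f_dep (fun T s => fht_join w (fht_delta w T + s) T)) => //.
Qed.

Lemma FHT_ne (h w : nat) : 0 < w -> 0 < h -> forall S, S \in FHT h w -> S != set0.
Proof.
move=> w0 h0 S; rewrite inE => /hasP [T HT /eqP ->].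
have Hs := fht_size HT.
have Ha := fht_lt w0 HT.
have T0 : 0 < size T by rewrite Hs expn_gt0.
have Hj : nth 0 T 0 < w by apply: (allP Ha); rewrite mem_nth.
apply/set0Pn; exists (Ordinal h0, Ordinal Hj); by rewrite inE.
Qed.
Theorem proposition9 (h w : nat) :
  (2 <= w)%N -> (1 <= h)%N ->
  (ORsize (FHT (2 ^ trunc_log 2 h) w) <= ORsize (FHT h w))%N.
Proof.
move=> w2 h1.
have w0 : 0 < w by apply: ltnW.
have Hle : 2 ^ trunc_log 2 h <= h by apply: trunc_logP.
have hl0 : 0 < 2 ^ trunc_log 2 h by rewrite expn_gt0.
set e := fun q : 'I_(2 ^ trunc_log 2 h) * 'I_w => (widen_ord Hle q.1, q.2).
have inj : injective e.
  move=> [a b] [c d] [] /= /eqP Hac ->.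
  by congr pair; apply/val_inj; apply/eqP.
apply: ORsize_mono.
  by apply: trivial_circuit; apply: FHT_ne.
apply: (restrict inj) => T HT; split; first exact: FHT_ne HT.
move: HT; rewrite inE => /hasP [T0 HT0 /eqP ->].
rewrite up_expnK // in HT0.
have Hkd : trunc_log 2 h <= up_log 2 h.
  by rewrite -(leq_exp2l _ _ (isT : 1 < 2)); apply: (leq_trans Hle); apply: up_logP.
have [s Hs] := fht_ext (up_log 2 h - trunc_log 2 h) HT0.
rewrite subnK // in Hs.
exists [set p : 'I_h * 'I_w | nth 0 (T0 ++ s) p.1 == p.2].
  by rewrite inE; apply/hasP; exists (T0 ++ s).
apply/setP => q; rewrite !inE /= nth_cat (fht_size HT0) ltn_ord //.
Qed.
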